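(* Let $V$ be a finite set whose elements carry positive weights, and for $A \subseteq V$ let $\vert A \vert$ denote the total weight of $A$. Let $\mathcal{P}$ and $\mathcal{P}'$ be partitions of $V$ into nonempty parts, and define $\phi_{\mathcal{P}'} : 2^{\mathcal{P}} \to \mathbb{R}$ by $$\phi_{\mathcal{P}'}(\mathcal{S}) = \sum_{P' \in \mathcal{P}'} \vert P' \vert \operatorname{peak}\Big(\frac{\vert U_{\mathcal{S}} \cap P' \vert}{\vert P' \vert}\Big),$$ where $U_{\mathcal{S}}$ is the union of the sets in $\mathcal{S}$ and $\operatorname{peak}(x) = x$ for $x \le 1/2$, $\operatorname{peak}(x) = 1-x$ for $x > 1/2$. Then $\phi_{\mathcal{P}'}$ is symmetric and submodular.
   Context: A function $\Pi : 2^{\mathcal{P}} \to \mathbb{R}$ is symmetric if $\Pi(\mathcal{S}) = \Pi(\mathcal{P} \setminus \mathcal{S})$ for all $\mathcal{S} \subseteq \mathcal{P}$, and submodular if $\Pi(\mathcal{S}_1 \cup \mathcal{S}_2) \le \Pi(\mathcal{S}_1) + \Pi(\mathcal{S}_2) - \Pi(\mathcal{S}_1 \cap \mathcal{S}_2)$ for all $\mathcal{S}_1, \mathcal{S}_2 \subseteq \mathcal{P}$. *)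

(* Defs.v *)
From mathcomp Require Import all_boot all_order all_algebra.
Set Implicit Arguments. Unset Strict Implicit. Unset Printing Implicit Defensive.
Import Order.TTheory GRing.Theory Num.Theory.
Local Open Scope ring_scope.

Definition wt {R : realFieldType} {V : finType} (w : V -> R) (A : {set V}) : R :=
  \sum_(v in A) w v.

Definition peak {R : realFieldType} (x : R) : R :=
  if x <= 2^-1 then x else 1 - x.

Definition Uof {V : finType} (S : {set {set V}}) : {set V} := \bigcup_(X in S) X.

Definition nonempty_partition {V : finType} (P : {set {set V}}) : bool :=
  partition P [set: V] && (set0 \notin P).

Definition phi {R : realFieldType} {V : finType} (w : V -> R)
  (P' : {set {set V}}) (S : {set {set V}}) : R :=
  \sum_(Q in P') wt w Q * peak (wt w (Uof S :&: Q) / wt w Q).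

Definition symmetric_on {V : finType} {R : realFieldType}
  (P : {set {set V}}) (f : {set {set V}} -> R) : Prop :=
  forall S : {set {set V}}, S \subset P -> f S = f (P :\: S).

Definition submodular_on {V : finType} {R : realFieldType}
  (P : {set {set V}}) (f : {set {set V}} -> R) : Prop :=
  forall S1 S2 : {set {set V}}, S1 \subset P -> S2 \subset P ->
    f (S1 :|: S2) <= f S1 + f S2 - f (S1 :&: S2).

(* Main.v *)
Require Import Defs.
From mathcomp Require Import all_boot all_order all_algebra.
From mathcomp Require Import lra.
Import Order.TTheory GRing.Theory Num.Theory.
Local Open Scope ring_scope.

Section Aux.
Variable R : realFieldType.

Definition g (q x : R) : R := if 2 * x <= q then x else q - x.

Lemma peakE (q x : R) : 0 < q -> q * peak (x / q) = g q x.
Proof.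
move=> q0; rewrite /peak /g.
have -> : (x / q <= 2^-1) = (2 * x <= q).
  by rewrite ler_pdivrMr // mulrC -ler_pdivlMl // ?invrK //; rewrite mulrC.
case: ifP => _; first by rewrite mulrCA divff ?gt_eqF // mulr1.
by rewrite mulrBr mulr1 mulrCA divff ?gt_eqF // mulr1.
Qed.

Lemma g_sym (q x : R) : g q (q - x) = g q x.
Proof.
rewrite /g; case: (lerP (2 * (q - x)) q) => h1; case: (lerP (2 * x) q) => h2; lra.
Qed.

Lemma g_sub (q a b c d : R) : d <= a -> d <= b -> c + d = a + b ->
  g q c + g q d <= g q a + g q b.
Proof.
move=> h1 h2 h3; rewrite /g.
case: (lerP (2 * c) q) => h4; case: (lerP (2 * d) q) => h5;
case: (lerP (2 * a) q) => h6; case: (lerP (2 * b) q) => h7; lra.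
Qed.
End Aux.

Lemma wt_ind (R : realFieldType) (V : finType) (w : V -> R) (X Q : {set V}) :
  wt w (X :&: Q) = \sum_(v in Q) (if v \in X then w v else 0).
Proof.
rewrite /wt -big_mkcondr; apply: eq_bigl => v; by rewrite in_setI andbC.
Qed.

Lemma wt_pos (R : realFieldType) (V : finType) (w : V -> R) (Q : {set V}) :
  (forall v, 0 < w v) -> Q != set0 -> 0 < wt w Q.
Proof.
move=> wp /set0Pn [x xQ]; rewrite /wt (bigD1 x) //=.
have h1 : 0 <= \sum_(i in Q | i != x) w i by apply: sumr_ge0 => i _; apply: ltW.
have h2 := wp x; lra.
Qed.

Theorem proposition2 (R : realFieldType) (V : finType) (w : V -> R)
  (w_pos : forall v, 0 < w v) (P P' : {set {set V}}) :
  nonempty_partition P -> nonempty_partition P' ->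
  symmetric_on P (phi w P') /\ submodular_on P (phi w P').
Proof.
move=> /andP [/andP [/eqP covP /andP [tP _]] _] /andP [_ n0P'].
have qpos : forall Q, Q \in P' -> 0 < wt w Q.
  move=> Q QP; apply: wt_pos => //; apply: contraNneq n0P' => <-; done.
split.
- move=> S SP; rewrite /phi; apply: eq_bigr => Q QP.
  rewrite !peakE ?qpos //.
  have -> : Uof (P :\: S) = ~: Uof S.
    apply/setP => x; rewrite inE.
    have : x \in cover P by rewrite covP inE.
    move=> /bigcupP [B BP xB].
    rewrite /Uof; apply/bigcupP/negP => [[X /setDP [XP XS] xX] /bigcupP [Y YS xY] | nU].
      have eXB := def_pblock tP XP xX.
      have eYB := def_pblock tP (subsetP SP _ YS) xY.
      by move: XS; rewrite -eXB eYB YS.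
    exists B => //; rewrite inE BP andbT; apply/negP => BS.
    by apply: nU; apply/bigcupP; exists B.
  rewrite -(@g_sym R (wt w Q) (wt w (Uof S :&: Q))).
  congr g; apply/eqP; rewrite subr_eq; apply/eqP.
  rewrite !wt_ind /wt -big_split /=; apply: eq_bigr => v _.
  by rewrite inE; case: (v \in Uof S) => /=; rewrite ?add0r ?addr0.
- move=> S1 S2 S1P S2P; rewrite lerBrDr /phi -!big_split /= ler_sum // => Q QP.
  rewrite !peakE ?qpos //.
  have eU : Uof (S1 :|: S2) = Uof S1 :|: Uof S2 by rewrite /Uof bigcup_setU.
  have eI : Uof (S1 :&: S2) = Uof S1 :&: Uof S2.
    apply/setP => x; rewrite inE /Uof; apply/bigcupP/andP.
      move=> [X /setIP [X1 X2] xX]; split; apply/bigcupP; exists X => //.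
    move=> [/bigcupP [X XS xX] /bigcupP [Y YS xY]].
    have eX := def_pblock tP (subsetP S1P _ XS) xX.
    have eY := def_pblock tP (subsetP S2P _ YS) xY.
    exists X => //; rewrite inE XS /=; by rewrite -eX eY.
  rewrite eU eI; apply: g_sub.
  + rewrite !wt_ind; apply: ler_sum => v _; rewrite inE.
    by case: (v \in Uof S1); case: (v \in Uof S2) => //=; apply: ltW.
  + rewrite !wt_ind; apply: ler_sum => v _; rewrite inE.
    by case: (v \in Uof S1); case: (v \in Uof S2) => //=; apply: ltW.
  + rewrite !wt_ind -!big_split /=; apply: eq_bigr => v _; rewrite !inE.
    by case: (v \in Uof S1); case: (v \in Uof S2); rewrite /= ?addr0 ?add0r // addrC.
Qed.
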